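(* Let $R=k[x_{ij}\mid1\le i\le n,1\le j\le m]$ over a field $k$, $n\le m$, and fix pairwise disjoint index sets $\sigma_1,\dots,\sigma_r\subseteq[m]$, each of size $n$. For each $j$ and $\ell\ge1$ let $q^j_\ell:D_\ell(G^* )\otimes\bigwedge^{n+\ell}F\to\bigwedge^\ell U_j$ be the map sending $g^{*(\alpha)}\otimes f_{\tau_1}\wedge\cdots\wedge f_{\tau_\ell}\wedge f_{\sigma_j}\mapsto(-1)^n\sum_{L\in\mathcal L_{\alpha,\tau}}e_{L_1}\wedge\cdots\wedge e_{L_\ell}$ for every $\tau=(\tau_1<\cdots<\tau_\ell)$ with $\tau\cap\sigma_j=\varnothing$ and $|\alpha|=\ell$, and sending all basis elements $g^{*(\alpha)}\otimes f_\rho$ with $\rho\not\supseteq\sigma_j$ to $0$. Then $$\operatorname{rank}_k\left(\begin{pmatrix}q^1_\ell\\ \vdots\\ q^r_\ell\end{pmatrix}\otimes k\right)=\binom{n+\ell-1}{\ell}\sum_{i=1}^r(-1)^{i+1}\binom{r}{i}\binom{m-in}{\ell-(i-1)n}.$$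
   Context: $F$ free with basis $f_1,\dots,f_m$, $G$ free with basis $g_1,\dots,g_n$, dual basis $g_i^*$; $D_\ell(G^* )$ the divided power with basis $g^{*(\alpha)}=g_1^{*(\alpha_1)}\cdots g_n^{*(\alpha_n)}$, $|\alpha|=\ell$; $f_\rho$ is the wedge of $f_s$, $s\in\rho$, in increasing order, and $f_{\sigma_j}=f_{\sigma_{j1}}\wedge\cdots\wedge f_{\sigma_{jn}}$. $U_j$ is free with basis $e_{is}$, $1\le i\le n$, $s\notin\sigma_j$, with $e_{(i,s)}=e_{is}$. For $\tau=(\tau_1<\dots<\tau_\ell)$ and $\alpha\in\mathbb Z^n_{\ge0}$, $\mathcal L_{\alpha,\tau}$ is the set of sets $L=\{(r_1,\tau_1),\dots,(r_\ell,\tau_\ell)\}$ with $r_s\in\{i:\alpha_i\ne0\}$ and $|\{s:r_s=j\}|=\alpha_j$ for all $j$, written $L=(L_1,\dots,L_\ell)$ with $L_s=(r_s,\tau_s)$. The stacked map goes to $\bigoplus_j\bigwedge^\ell U_j$. Convention: $\binom{a}{b}=0$ if $b>a$ or $b<0$. *)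

(* Defs.v *)
From HB Require Import structures.
From mathcomp Require Import all_boot all_order all_algebra.
Set Implicit Arguments. Unset Strict Implicit. Unset Printing Implicit Defensive.
Import Order.TTheory GRing.Theory Num.Theory.
Local Open Scope ring_scope.

(* Indices are 0-based: [n] = 'I_n, [m] = 'I_m, j ranges over 'I_r.
   Basis of D_l(G^* ) : alpha : 'I_n -> nat with |alpha| = l
     (encoded as {ffun 'I_n -> 'I_l.+1}, entries are automatically <= l).
   Basis of /\^{n+l} F : f_rho, rho : {set 'I_m}, #|rho| = n + l.
   Basis of U_j : e_(i,s), (i,s) : 'I_n * 'I_m, s \notin sigma_j,
     ordered lexicographically (first i, then s).
   Basis of /\^l U_j : e_S = wedge of the elements of S in that order,
     S an l-subset of the basis of U_j. *)

Definition Lset (n m l : nat) (alpha : {ffun 'I_n -> 'I_l.+1}) (tau : {set 'I_m})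
  : {set {set ('I_n * 'I_m)}} :=
  [set L | [exists rr : {ffun 'I_m -> 'I_n},
     [&& L == [set (rr t, t) | t in tau],
         [forall t in tau, nat_of_ord (alpha (rr t)) != 0%N] &
         [forall i, #|[set t in tau | rr t == i]| == nat_of_ord (alpha i)]]]].

(* e_{L_1} /\ ... /\ e_{L_l} (L listed with increasing second coordinates)
   equals wedge_sign L * e_L, e_L the basis vector (lexicographic order). *)
Definition wedge_sign (K : fieldType) (n m : nat) (L : {set ('I_n * 'I_m)}) : K :=
  (-1) ^+ #|[set pq : ('I_n * 'I_m) * ('I_n * 'I_m) |
              [&& pq.1 \in L, pq.2 \in L, (pq.1.2 < pq.2.2)%N & (pq.2.1 < pq.1.1)%N]]|.

(* f_rho = col_sign tau sigma * (f_tau /\ f_sigma) when rho = tau (disjoint union) sigma. *)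
Definition col_sign (K : fieldType) (m : nat) (tau sigma : {set 'I_m}) : K :=
  (-1) ^+ #|[set ab : 'I_m * 'I_m |
              [&& ab.1 \in tau, ab.2 \in sigma & (ab.2 < ab.1)%N]]|.

(* Coefficient of e_S in q^j_l (g^{*(alpha)} (x) f_rho), where sigmaj = sigma_j. *)
Definition q_entry (K : fieldType) (n m l : nat) (sigmaj : {set 'I_m})
  (S : {set ('I_n * 'I_m)}) (alpha : {ffun 'I_n -> 'I_l.+1}) (rho : {set 'I_m}) : K :=
  if sigmaj \subset rho then
    let tau := rho :\: sigmaj in
    (-1) ^+ n * @col_sign K m tau sigmaj *
      \sum_(L in @Lset n m l alpha tau) (if L == S then @wedge_sign K n m L else 0)
  else 0.

(* Row index set of the stacked map: pairs (j, S) with S a basis element of /\^l U_j. *)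
Definition qrows (n m l r : nat) (sigma : 'I_r -> {set 'I_m})
  : {pred ('I_r * {set ('I_n * 'I_m)})} :=
  [pred x : 'I_r * {set ('I_n * 'I_m)} | (#|x.2| == l) && [forall p in x.2, p.2 \notin sigma x.1]].

(* Column index set: basis g^{*(alpha)} (x) f_rho of D_l(G^* ) (x) /\^{n+l} F. *)
Definition qcols (n m l : nat) : {pred ({ffun 'I_n -> 'I_l.+1} * {set 'I_m})} :=
  [pred y : {ffun 'I_n -> 'I_l.+1} * {set 'I_m} | ((\sum_i nat_of_ord (y.1 i))%N == l) && (#|y.2| == n + l)%N].

(* Matrix over k of the stacked map (q^1_l ; ... ; q^r_l) (x) k
   (rows: codomain basis, columns: domain basis). *)
Definition qmatrix (K : fieldType) (n m l r : nat) (sigma : 'I_r -> {set 'I_m})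
  : 'M[K]_(#|@qrows n m l r sigma|, #|@qcols n m l|) :=
  \matrix_(a, b)
    @q_entry K n m l (sigma (enum_val a).1) (enum_val a).2 (enum_val b).1 (enum_val b).2.

Definition binz (a b : int) : int :=
  if (0 <= b) && (b <= a) then ('C(`|a|%N, `|b|%N))%:Z else 0.

(* Main.v *)
Require Import Defs.
From HB Require Import structures.
From mathcomp Require Import all_boot all_order all_algebra.
Set Implicit Arguments. Unset Strict Implicit. Unset Printing Implicit Defensive.
Import Order.TTheory GRing.Theory Num.Theory.

Lemma exists_counts (T : finType) (a : T -> nat) :
  exists s : seq T, size s = (\sum_i a i)%N /\ forall i, count_mem i s = a i.
Proof.
exists (flatten [seq nseq (a i) i | i <- enum T]); split.
  rewrite size_flatten /shape -map_comp sumnE big_map.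
  rewrite big_enum /=; apply: eq_bigr => i _; exact: size_nseq.
move=> i; rewrite count_flatten -map_comp sumnE big_map big_enum /=.
rewrite (bigD1 i) //= count_nseq /= eqxx mul1n big1 ?addn0 // => j hj.
by rewrite count_nseq /= (negbTE hj).
Qed.

Lemma counts_perm (T : eqType) (s1 s2 : seq T) :
  (forall x, count_mem x s1 = count_mem x s2) -> perm_eq s1 s2.
Proof.
elim: s1 s2 => [|x s1 IH] s2 h.
  case: s2 h => // y s2 /(_ y) /=; rewrite eqxx; by [].
have xs2 : x \in s2.
  by rewrite -has_pred1 has_count -h /= eqxx.
rewrite (permPr (perm_to_rem xs2)) perm_cons; apply: IH => y.
rewrite count_mem_rem -h /= addnC; case: (x == y) => /=; [by rewrite addn1 subn1 | by rewrite addn0 subn0].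
Qed.

Lemma sum_count_mem (T : finType) (s : seq T) : (\sum_i count_mem i s)%N = size s.
Proof.
elim: s => [|x s IH] /=; first by rewrite big1.
rewrite big_split /= IH (bigD1 x) //= eqxx big1 ?add0n ?addn0 ?add1n // => j hj.
by rewrite eq_sym (negbTE hj).
Qed.

Lemma card_comp n l : (0 < l)%N ->
  #|[set a : {ffun 'I_n -> 'I_l.+1} | (\sum_i nat_of_ord (a i) == l)%N]| = 'C(n + l - 1, l).
Proof.
move=> l0; case: n => [|n].
  rewrite add0n bin_small; last by rewrite ltn_subrL l0.
  apply: eq_card0 => a; rewrite inE big_ord0 eq_sym; apply/negbTE.
  by rewrite -lt0n.
rewrite addSn subn1 /= addnC -card_sorted_tuples.
pose h (t : l.-tuple 'I_n.+1) : {ffun 'I_n.+1 -> 'I_l.+1} :=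
  [ffun i => inord (count_mem i t)].
have hv t i : nat_of_ord (h t i) = count_mem i t.
  rewrite ffunE inordK // ltnS; apply: leq_trans (count_size _ _) _; by rewrite size_tuple.
set ST := [set t : l.-tuple 'I_n.+1 | sorted leq (map val t)].
have -> : [set a : {ffun 'I_n.+1 -> 'I_l.+1} | (\sum_i nat_of_ord (a i) == l)%N]
    = h @: ST.
  apply/setP=> a; rewrite inE; apply/idP/imsetP.
    move/eqP=> ha.
    have [s [ss cs]] := exists_counts (fun i => nat_of_ord (a i)).
    pose le := fun x y : 'I_n.+1 => (x <= y)%N.
    have szt : size (sort le s) == l by rewrite size_sort ss ha.
    exists (Tuple szt).
      rewrite inE /= sorted_map; apply: sort_sorted => x y; exact: leq_total.
    apply/ffunP=> i; apply/val_inj; rewrite /= hv /= -cs.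
    have: perm_eq (sort le s) s by rewrite perm_sort. move/permP=> -> //.
  case=> t _ ->; apply/eqP.
  rewrite (eq_bigr (fun i => count_mem i t)); last by move=> i _; rewrite hv.
  by rewrite sum_count_mem size_tuple.
apply: card_in_imset => t t'; rewrite !inE => st st' he.
have hc i : count_mem i t = count_mem i t'.
  by rewrite -!hv he.
have pe : perm_eq (map val t) (map val t').
  by apply: perm_map; apply: counts_perm.
apply: val_inj; apply: (inj_map val_inj); apply: (sorted_eq leq_trans anti_leq) => //.
Qed.

Lemma card_cup (I T : finType) n (sigma : I -> {set T})
  (hsize : forall j, #|sigma j| = n)
  (hdisj : forall j1 j2, j1 != j2 -> [disjoint sigma j1 & sigma j2]) :
  forall J : {set I}, #|\bigcup_(j in J) sigma j| = (#|J| * n)%N.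
Proof.
move=> J; move: {2}#|J| (erefl #|J|) => k; elim: k J => [|k IH] J hJ.
  by move/eqP: hJ; rewrite cards_eq0 => /eqP ->; rewrite big_set0 !cards0.
have [j jJ] : exists j, j \in J.
  by apply/set0Pn; rewrite -card_gt0 hJ.
rewrite (bigD1 j jJ) /=.
have -> : \bigcup_(i | (i \in J) && (i != j)) sigma i = \bigcup_(i in J :\ j) sigma i.
  by apply: eq_bigl => i; rewrite !inE andbC.
have hd : [disjoint sigma j & \bigcup_(i in J :\ j) sigma i].
  by apply: bigcup_disjoint => i; rewrite !inE => /andP[hij _]; apply: hdisj; rewrite eq_sym.
rewrite cardsU (disjoint_setI0 hd) cards0 subn0 IH ?hsize ?mulSn //.
all: try (by move: hJ; rewrite (cardsD1 j J) jJ add1n => -[]).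
Qed.

Lemma card_super (T : finType) (U : {set T}) k :
  #|[set rho : {set T} | (#|rho| == k) && (U \subset rho)]| =
  if (#|U| <= k)%N then 'C(#|T| - #|U|, k - #|U|) else 0%N.
Proof.
case: leqP => hk; last first.
  apply: eq_card0 => rho; rewrite inE; apply/negbTE.
  apply/negP=> /andP[/eqP hr hs]; have := subset_leq_card hs; rewrite hr leqNgt hk.
  by [].
rewrite -[#|T|](cardsC U) addKn -cards_draws.
pose f (B : {set T}) := B :|: U.
have -> : [set rho : {set T} | (#|rho| == k) && (U \subset rho)] =
   f @: [set B : {set T} | B \subset ~: U & #|B| == k - #|U|].
  apply/setP=> rho; rewrite inE; apply/idP/imsetP.
    case/andP=> /eqP hr hs; exists (rho :\: U).
      rewrite inE; apply/andP; split.
        by apply/subsetP=> x; rewrite !inE => /andP[].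
      by rewrite cardsD (setIidPr hs) hr.
    apply/setP=> x; rewrite !inE; case: (boolP (x \in U)) => hx /=; [by rewrite (subsetP hs) | by rewrite orbF].
  case=> B; rewrite inE => /andP[hB /eqP hc] ->; apply/andP; split.
    rewrite /f cardsU.
    have -> : B :&: U = set0.
      apply/setP=> x; rewrite !inE; case: (boolP (x \in B)) => //= hx.
      by have := subsetP hB x hx; rewrite inE => /negbTE.
    by rewrite cards0 subn0 hc subnK.
  exact: subsetUr.
apply: card_in_imset => B B'; rewrite !inE => /andP[hB _] /andP[hB' _] he.
apply/setP=> x; have := congr1 (fun S : {set T} => x \in S) he; rewrite /f !inE.
case: (boolP (x \in U)) => hx; last by rewrite !orbF.
have := subsetP hB x; have := subsetP hB' x; rewrite !inE hx /=.
by case: (x \in B); case: (x \in B') => // H1 H2 _; first [by case: (H1 isT) | by case: (H2 isT)].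
Qed.

Lemma map_nth_index (T : eqType) (U : Type) (d : U) (e : seq T) (s : seq U) :
  uniq e -> size s = size e -> map (fun t => nth d s (index t e)) e = s.
Proof.
elim: e s => [|x e IH] [|y s] //= /andP[xe ue] [hs].
rewrite eqxx /=; congr (_ :: _).
transitivity (map (fun t => nth d s (index t e)) e); last exact: IH.
apply/eq_in_map => t te /=.
have -> : (x == t) = false by apply: contraNF xe => /eqP ->.
by [].
Qed.

Lemma card_setI_count (T : finType) (A : {set T}) (P : pred T) :
  #|[set t in A | P t]| = count P (enum A).
Proof.
by rewrite -sum1dep_card -big_enum_cond /= sum1_count.
Qed.

Lemma Lset_props n m l (alpha : {ffun 'I_n -> 'I_l.+1}) (tau : {set 'I_m}) S :
  S \in Lset alpha tau ->
  tau = [set p.2 | p in S] /\ forall i, nat_of_ord (alpha i) = #|[set p in S | p.1 == i]|.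
Proof.
rewrite inE => /existsP[rr /and3P[/eqP -> _ /forallP hc]]; split.
  apply/setP=> t; apply/idP/imsetP => [ht|[p /imsetP[t' ht' ->] ->]] //.
  by exists (rr t, t) => //; apply: imset_f.
move=> i; rewrite -(eqP (hc i)).
have -> : [set p in [set (rr t, t) | t in tau] | p.1 == i] =
    (fun t => (rr t, t)) @: [set t in tau | rr t == i].
  apply/setP=> p; rewrite inE; apply/andP/imsetP.
    case=> /imsetP[t ht ->] /= hi; exists t => //; by rewrite inE ht hi.
  case=> t; rewrite inE => /andP[ht hi] ->; split => //; exact: imset_f.
by rewrite card_imset // => a b [].
Qed.

Lemma Lset_inj n m l (a1 a2 : {ffun 'I_n -> 'I_l.+1}) (t1 t2 : {set 'I_m}) S :
  S \in Lset a1 t1 -> S \in Lset a2 t2 -> a1 = a2 /\ t1 = t2.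
Proof.
move=> /Lset_props [h1 h1'] /Lset_props [h2 h2']; split; last by rewrite h1 h2.
by apply/ffunP => i; apply: val_inj; rewrite /= h1' h2'.
Qed.

Lemma Lset_exists n m l (alpha : {ffun 'I_n -> 'I_l.+1}) (tau : {set 'I_m}) :
  (0 < n)%N -> (\sum_i nat_of_ord (alpha i))%N = #|tau| ->
  exists S, [/\ S \in Lset alpha tau, #|S| = #|tau| & forall p, p \in S -> p.2 \in tau].
Proof.
case: n alpha => // n alpha _ hsum.
have [s [ss cs]] := exists_counts (fun i => nat_of_ord (alpha i)).
pose e := enum tau.
pose rr : {ffun 'I_m -> 'I_n.+1} := [ffun t => nth ord0 s (index t e)].
have hcount i : #|[set t in tau | rr t == i]| = alpha i.
  rewrite card_setI_count -cs -/e.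
  rewrite -(map_nth_index ord0 (enum_uniq (mem tau)) (_ : size s = size e)); last first.
    by rewrite ss hsum cardE.
  rewrite count_map; apply: eq_count => t /=; by rewrite ffunE.
exists [set (rr t, t) | t in tau]; split.
- rewrite inE; apply/existsP; exists rr; apply/and3P; split => //.
    apply/forall_inP => t ht; rewrite -lt0n -hcount card_gt0.
    by apply/set0Pn; exists t; rewrite inE ht eqxx.
  by apply/forallP => i; rewrite hcount.
- by rewrite card_imset // => a b [].
- by move=> p /imsetP[t ht ->].
Qed.

Local Open Scope ring_scope.

Lemma rank_onehot (K : fieldType) p q (M : 'M[K]_(p,q)) :
  (forall i j j', M i j != 0 -> M i j' != 0 -> j = j') ->
  \rank M = #|[set j | [exists i, M i j != 0]]|.
Proof.
move=> Hrow; set C := [set j | [exists i, M i j != 0]].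
pose g (k : 'I_#|C|) : 'I_q := enum_val k.
have gC k : g k \in C by apply: enum_valP.
have ginj : injective g by apply: enum_val_inj.
apply/eqP; rewrite eqn_leq; apply/andP; split.
  pose E : 'M[K]_(#|C|, q) := \matrix_(k, j) (g k == j)%:R.
  have -> : M = colsub g M *m E.
    apply/matrixP=> i j; rewrite !mxE.
    case: (boolP (j \in C)) => jC.
      rewrite (bigD1 (enum_rank_in jC j)) //= !mxE /g enum_rankK_in // eqxx mulr1.
      rewrite big1 ?addr0 // => k hk; rewrite !mxE.
      case: eqP => [hj|]; last by rewrite mulr0.
      by case/eqP: hk; apply: ginj; rewrite hj /g enum_rankK_in.
    rewrite big1; last first.
      move=> k _; rewrite !mxE; case: eqP => [hj|]; last by rewrite mulr0.
      by move: jC; rewrite -hj gC.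
    move: jC; rewrite inE negb_exists => /forallP /(_ i).
    by rewrite negbK => /eqP.
  apply: leq_trans (mxrankM_maxl _ _) _; exact: rank_leq_col.
have hex k : exists i, M i (g k) != 0.
  by have := gC k; rewrite inE => /existsP.
pose f k := xchoose (hex k).
have fP k : M (f k) (g k) != 0 := xchooseP (hex k).
pose N := rowsub f (colsub g M).
have NE : N = diag_mx (\row_k M (f k) (g k)).
  apply/matrixP=> k k'; rewrite !mxE.
  case: eqP => [->|hne]; first by rewrite mulr1n.
  rewrite mulr0n; apply/eqP; apply: contraT => hnz.
  by case: hne; apply: ginj; apply: Hrow (fP k) hnz.
have Nu : N \in unitmx.
  rewrite unitmxE NE det_diag unitfE; apply/prodf_neq0 => k _.
  by rewrite mxE.
rewrite -(mxrank_unit Nu) /N rowsubE.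
apply: leq_trans (mxrankM_maxr _ _) _.
have -> : colsub g M = M *m colsub g 1%:M by rewrite mulmx_colsub mulmx1.
exact: mxrankM_maxl.
Qed.

Lemma card_sum_int (T : finType) (P Q : pred T) :
  (#|[set x | P x && Q x]|%:Z) = \sum_(x | P x) ((Q x)%:R : int).
Proof.
rewrite -sum1dep_card big_mkcondr /=.
rewrite (big_morph Posz PoszD (erefl 0%:Z)).
by apply: eq_bigr => x _; case: (Q x).
Qed.

Lemma prod_bool (I : finType) (J : {set I}) (b : I -> bool) :
  \prod_(i in J) ((b i)%:R : int) = ([forall i in J, b i])%:R.
Proof.
case: (boolP [forall i in J, b i]) => h.
  by rewrite big1 // => i hi; rewrite (forall_inP h i hi).
case/forall_inPn: h => i hi hb.
by rewrite (bigD1 i) //= (negbTE hb) mul0r.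
Qed.

Lemma prod_expand (I : finType) (x : I -> int) :
  \prod_i (1 - x i) = \sum_(J : {set I}) (-1) ^+ #|J| * \prod_(i in J) x i.
Proof.
under eq_bigr do rewrite addrC.
rewrite bigA_distr; apply: eq_bigr => J _.
by rewrite -big_mkcond /= prodrN.
Qed.

Lemma incl_excl m n r k (sigma : 'I_r -> {set 'I_m})
  (hsize : forall j, #|sigma j| = n)
  (hdisj : forall j1 j2, j1 != j2 -> [disjoint sigma j1 & sigma j2]) :
  (#|[set rho : {set 'I_m} | (#|rho| == k) && [exists j, sigma j \subset rho]]|%:Z) =
  \sum_(1 <= i < r.+1) (-1)^+(i+1) * ('C(r,i))%:Z *
     (if (i*n <= k)%N then 'C(m - i*n, k - i*n) else 0)%N%:Z.
Proof.
pose c (i : nat) : int := (if (i*n <= k)%N then 'C(m - i*n, k - i*n) else 0)%N%:Z.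
have hc (J : {set 'I_r}) : \sum_(rho : {set 'I_m} | #|rho| == k)
    (((\bigcup_(j in J) sigma j) \subset rho)%:R : int) = c #|J|.
  by rewrite -card_sum_int card_super (card_cup hsize hdisj) card_ord.
rewrite card_sum_int.
transitivity (\sum_(rho : {set 'I_m} | #|rho| == k) (1 - \sum_(J : {set 'I_r})
   (-1) ^+ #|J| * (((\bigcup_(j in J) sigma j) \subset rho)%:R : int))).
  apply: eq_bigr => rho _.
  have hU (J : {set 'I_r}) : (((\bigcup_(j in J) sigma j) \subset rho)%:R : int)
      = \prod_(j in J) ((sigma j \subset rho)%:R : int).
    rewrite prod_bool.
    suff -> : (\bigcup_(j in J) sigma j \subset rho) = [forall i in J, sigma i \subset rho] by [].
    apply/idP/idP => [/bigcupsP h | /forall_inP h].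
      by apply/forall_inP => i hi; apply: h.
    by apply/bigcupsP => i hi; apply: h.
  under eq_bigr do rewrite hU.
  rewrite -prod_expand.
  case: (boolP [exists j, sigma j \subset rho]) => [/existsP[j hj]|hn].
    by rewrite (bigD1 j) //= hj subrr mul0r subr0.
  rewrite big1 ?subrr // => j _; move: hn; rewrite negb_exists => /forallP /(_ j) /negbTE ->.
  by rewrite subr0.
have h0 : \sum_(rho : {set 'I_m} | #|rho| == k) (1 : int) = c 0%N.
  have -> : c 0%N = c #|@set0 'I_r| by rewrite cards0.
  rewrite -(hc set0); apply: eq_bigr => rho _; by rewrite big_set0 sub0set.
rewrite sumrB h0 exchange_big /=.
under eq_bigr do rewrite -mulr_sumr hc.
rewrite (partition_big (fun J : {set 'I_r} => (inord #|J| : 'I_r.+1)) predT) //=.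
have hcd (i : 'I_r.+1) : \sum_(J : {set 'I_r} | inord #|J| == i) (-1) ^+ #|J| * c #|J|
    = ((-1) ^+ i * c i) *+ 'C(r, i).
  have hJ (J : {set 'I_r}) : (inord #|J| == i) = (#|J| == i).
    have hle : (#|J| < r.+1)%N by rewrite ltnS -[X in (_ <= X)%N](card_ord r) max_card.
    apply/eqP/eqP => [<-|h]; first by rewrite inordK.
    by apply: val_inj; rewrite /= inordK.
  rewrite (eq_bigl _ _ hJ).
  rewrite (eq_bigr (fun _ => (-1) ^+ i * c i)); last by move=> J /eqP ->.
  rewrite sumr_const; congr (_ *+ _).
  by rewrite -[X in 'C(X, _)](card_ord r) -card_draws; apply: eq_card => J; rewrite inE.
under eq_bigr do rewrite hcd.
rewrite big_ord_recl /= expr0 mul1r bin0 mulr1n opprD addrA subrr add0r.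
rewrite big_add1 /= big_mkord -sumrN; apply: eq_bigr => i _.
rewrite /bump /= add1n.
rewrite -mulNrn -mulr_natr natz addn1 exprS mulN1r mulNr /c.
by rewrite opprK !exprS !mulN1r opprK mulrAC.
Qed.

Lemma binz_eq n m l i : (i * n <= m)%N -> (1 <= i)%N ->
  ((if (i * n <= n + l)%N then 'C(m - i * n, n + l - i * n) else 0)%N%:Z) =
  binz (m%:Z - (i * n)%N%:Z) (l%:Z - ((i - 1) * n)%N%:Z).
Proof.
case: i => [//|i] hm _; rewrite subn1 /= /binz (subzn hm).
case: leqP => h.
  have hil : (i * n <= l)%N by move: h; rewrite mulSn leq_add2l.
  have -> : l%:Z - (i * n)%N%:Z = (n + l - i.+1 * n)%N%:Z.
    by rewrite (subzn hil) mulSn subnDl.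
  rewrite le0z_nat lez_nat /=.
  by case: leqP => // hlt; rewrite bin_small.
have -> : (0 <= l%:Z - (i * n)%N%:Z) = false.
  by rewrite subr_ge0 lez_nat; apply/negbTE; rewrite -ltnNge; move: h; rewrite mulSn ltn_add2l.
by [].
Qed.

Lemma q_entry_neq0 (K : fieldType) n m l (sj : {set 'I_m}) (S : {set ('I_n * 'I_m)})
  (alpha : {ffun 'I_n -> 'I_l.+1}) (rho : {set 'I_m}) :
  (@q_entry K n m l sj S alpha rho != 0) = (sj \subset rho) && (S \in Lset alpha (rho :\: sj)).
Proof.
rewrite /q_entry; case: ifP => hs /=; last by rewrite eqxx.
have -> : \sum_(L in Lset alpha (rho :\: sj)) (if L == S then @wedge_sign K n m L else 0)
    = if S \in Lset alpha (rho :\: sj) then @wedge_sign K n m S else 0.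
  case: (boolP (S \in _)) => hS.
    by rewrite (bigD1 S) //= eqxx big1 ?addr0 // => L /andP[_ /negbTE ->].
  by rewrite big1 // => L hL; case: eqP => // e; move: hS; rewrite -e hL.
case: (S \in _); last by rewrite mulr0 eqxx.
by rewrite /wedge_sign /col_sign !mulf_eq0 !expf_eq0 oppr_eq0 oner_eq0 !andbF.
Qed.

Unset Implicit Arguments.

Theorem lemma5p5 (K : fieldType) (n m r l : nat) (sigma : 'I_r -> {set 'I_m})
  (hnm : (n <= m)%N)
  (hsize : forall j, #|sigma j| = n)
  (hdisj : forall j1 j2, j1 != j2 -> [disjoint sigma j1 & sigma j2])
  (hl : (1 <= l)%N) :
  (\rank (@qmatrix K n m l r sigma))%:Z =
    ('C(n + l - 1, l))%:Z *
    \sum_(1 <= i < r.+1)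
       ((-1) ^+ (i + 1) * ('C(r, i))%:Z *
        binz (m%:Z - (i * n)%N%:Z) (l%:Z - ((i - 1) * n)%N%:Z)).
Proof.
set M := @qmatrix K n m l r sigma.
have Mneq0 a b : (M a b != 0) = (sigma (enum_val a).1 \subset (enum_val b).2) &&
   ((enum_val a).2 \in Lset (enum_val b).1 ((enum_val b).2 :\: sigma (enum_val a).1)).
  by rewrite /M /qmatrix mxE q_entry_neq0.
rewrite (@rank_onehot K _ _ M); last first.
  move=> a b b'; rewrite !Mneq0 => /andP[h1 L1] /andP[h2 L2].
  have [ea et] := Lset_inj L1 L2.
  apply: enum_val_inj; move: ea et.
  case: (enum_val b) h1 L1 => al rh; case: (enum_val b') h2 L2 => al' rh' /= h2 _ h1 _ -> et.
  congr (_, _); apply/setP => x; have := congr1 (fun A : {set 'I_m} => x \in A) et.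
  rewrite !inE; case: (boolP (x \in sigma (enum_val a).1)) => hx /=; last by [].
  by rewrite (subsetP h1 x hx) (subsetP h2 x hx).
have colP b : [exists a, M a b != 0] = [exists j, sigma j \subset (enum_val b).2].
  apply/existsP/existsP => [[a]|[j hj]].
    by rewrite Mneq0 => /andP[h _]; exists (enum_val a).1.
  have := enum_valP b; move=> /andP[/eqP hsum /eqP hcard].
  have n0 : (0 < n)%N.
    case: (pickP (fun _ : 'I_n => true)) => [i _|h0]; first exact: leq_ltn_trans (leq0n i) (ltn_ord i).
    by move: hsum; rewrite big1 // => [h|i _]; [move: hl; rewrite -h | have := h0 i].
  have htau : #|(enum_val b).2 :\: sigma j| = l.
    by rewrite cardsD (setIidPr hj) hcard hsize addKn.
  have [S [hS hSc hSt]] := Lset_exists (alpha := (enum_val b).1) n0 (etrans hsum (esym htau)).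
  have hx : (j, S) \in qrows l sigma.
    rewrite /qrows inE /= hSc htau eqxx /=; apply/forall_inP => p hp.
    by have := hSt p hp; rewrite inE => /andP[].
  exists (enum_rank_in hx (j, S)); rewrite Mneq0 enum_rankK_in //= hj /=.
  by [].
have -> : #|[set j | [exists i, M i j != 0]]| =
    #|[set y in @qcols n m l | [exists j, sigma j \subset y.2]]|.
  rewrite -(card_imset _ enum_val_inj); apply: eq_card => y.
  apply/imsetP/idP => [[b hb ->]|].
    rewrite inE colP in hb; rewrite inE; apply/andP; split; [exact: enum_valP | exact: hb].
  rewrite inE => /andP[hy hj]; exists (enum_rank_in hy y); last by rewrite enum_rankK_in.
  by rewrite inE colP enum_rankK_in.
have -> : [set y in @qcols n m l | [exists j, sigma j \subset y.2]] =
    setX [set a : {ffun 'I_n -> 'I_l.+1} | (\sum_i nat_of_ord (a i) == l)%N]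
         [set rho : {set 'I_m} | (#|rho| == n + l)%N && [exists j, sigma j \subset rho]].
  apply/setP => -[a rho]; rewrite !inE /=.
  by rewrite andbA.
rewrite cardsX PoszM (card_comp _ hl) (incl_excl (n + l)%N hsize hdisj).
have hrn : (r * n <= m)%N.
  have := card_cup hsize hdisj setT; rewrite cardsT card_ord => <-.
  by rewrite -[X in (_ <= X)%N](card_ord m) max_card.
congr (_ * _); apply: eq_big_nat => i /andP[hi1 hi2].
rewrite (binz_eq l _ hi1) //.
by apply: leq_trans hrn; rewrite leq_mul2r -ltnS hi2 orbT.
Qed.
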